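(* In the Bloc formation mechanism with $n=2p+1$ agents, any message profile $m$ that admits a bloc also admits an effective bloc $B^*$. Moreover the effective bloc $B^*$ is unique and $B^*=\bigcap_{B\in B^m}B$, where $B^m$ is the set of all blocs in $m$.
   Context: Agents $I=\{1,\dots,n\}$, $n=2p+1$, options $A=\{a,b\}$. In the Bloc formation mechanism each agent $i$ sends $m_i=(v_i,c_i)$, with a vote $v_i\in A$ and a set $c_i$ of exactly $p$ agents other than $i$ (nominations). For $x\in A$, a set $B\subseteq I$ with $|B|\ge p+1$ is a bloc in favor of $x$ in $m$ if $v_i=x$ and $c_i\subseteq B$ for every $i\in B$. The nomination graph $G_m$ is the directed graph on vertex set $I$ with an edge $i\to j$ iff $j\in c_i$. A bloc $B$ is effective if the subgraph of $G_m$ induced by $B$ is strongly connected, i.e., for any $i,j\in B$ there is a directed path from $i$ to $j$ using only vertices of $B$. *)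

(* Defs.v *)
From HB Require Import structures.
From mathcomp Require Import all_boot.
Set Implicit Arguments. Unset Strict Implicit. Unset Printing Implicit Defensive.

Inductive alt := alt_a | alt_b.

Definition alt_to_bool (x : alt) : bool := if x is alt_a then true else false.
Definition bool_to_alt (b : bool) : alt := if b then alt_a else alt_b.
Lemma alt_boolK : cancel alt_to_bool bool_to_alt. Proof. by case. Qed.
HB.instance Definition _ := Equality.copy alt (can_type alt_boolK).
HB.instance Definition _ := Finite.copy alt (can_type alt_boolK).

Definition vote n (m : 'I_n -> alt * {set 'I_n}) (i : 'I_n) : alt := (m i).1.
Definition noms n (m : 'I_n -> alt * {set 'I_n}) (i : 'I_n) : {set 'I_n} := (m i).2.

Definition valid_profile n p (m : 'I_n -> alt * {set 'I_n}) : Prop :=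
  forall i : 'I_n, #|noms m i| = p /\ i \notin noms m i.

Definition bloc_for n p (m : 'I_n -> alt * {set 'I_n}) (x : alt) (B : {set 'I_n}) : bool :=
  (p.+1 <= #|B|) && [forall i in B, (vote m i == x) && (noms m i \subset B)].

Definition bloc n p (m : 'I_n -> alt * {set 'I_n}) (B : {set 'I_n}) : bool :=
  [exists x : alt, bloc_for p m x B].

Definition nom_graph n (m : 'I_n -> alt * {set 'I_n}) : rel 'I_n :=
  fun i j => j \in noms m i.

Definition induced n (e : rel 'I_n) (B : {set 'I_n}) : rel 'I_n :=
  fun i j => [&& i \in B, j \in B & e i j].

Definition effective n (m : 'I_n -> alt * {set 'I_n}) (B : {set 'I_n}) : Prop :=
  forall i j, i \in B -> j \in B -> connect (induced (nom_graph m) B) i j.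

(* Main.v *)
Require Import Defs.
From mathcomp Require Import all_boot.
From mathcomp Require Import zify.

Section S.
Variables (n p : nat) (m : 'I_n -> alt * {set 'I_n}).

Lemma bloc_forP x (B : {set 'I_n}) : reflect (p < #|B| /\ forall i, i \in B -> vote m i = x /\ noms m i \subset B)
  (bloc_for p m x B).
Proof.
apply: (iffP andP) => [[h1 /forall_inP h2]|[h1 h2]]; split => //.
  by move=> i /h2 /andP[/eqP -> ->].
by apply/forall_inP => i /h2 [-> ->]; rewrite eqxx.
Qed.

Lemma blocP (B : {set 'I_n}) : reflect (exists x, bloc_for p m x B) (bloc p m B).
Proof. exact: existsP. Qed.

Lemma connect_stay (e : rel 'I_n) (A : {set 'I_n}) x y :
  (forall u v, e u v -> u \in A -> v \in A) -> connect e x y -> x \in A -> y \in A.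
Proof.
move=> hA /connectP [s]; elim: s x => [|z s IH] x /=; first by move=> _ -> .
by case/andP => exz pz ly xA; apply: (IH z pz ly); apply: hA exz xA.
Qed.

Hypothesis hn : n = p.*2.+1.
Hypothesis hv : valid_profile p m.

Lemma card_noms1 i : #|i |: noms m i| = p.+1.
Proof. by have [h1 h2] := hv i; rewrite cardsU1 h2 h1. Qed.

Lemma blocI (B1 B2 : {set 'I_n}) : bloc p m B1 -> bloc p m B2 -> bloc p m (B1 :&: B2).
Proof.
case/blocP => x /bloc_forP [c1 h1]; case/blocP => y /bloc_forP [c2 h2].
have : 0 < #|B1 :&: B2|.
  have := cardsUI B1 B2; have := max_card (B1 :|: B2); rewrite card_ord.
  move: c1 c2 hn; rewrite -addnn; lia.
case/card_gt0P => i; rewrite inE => /andP [iB1 iB2].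
have [vx _] := h1 i iB1; have [vy _] := h2 i iB2.
apply/blocP; exists x; apply/bloc_forP; split.
  apply: (@leq_trans #|i |: noms m i|); first by rewrite card_noms1.
  apply: subset_leq_card; apply/subsetP => k; rewrite !inE => /orP [/eqP ->|kn].
    by rewrite iB1 iB2.
  have [_ s1] := h1 i iB1; have [_ s2] := h2 i iB2.
  by rewrite (subsetP s1 _ kn) (subsetP s2 _ kn).
move=> k; rewrite inE => /andP [k1 k2]; have [-> s1] := h1 k k1; have [_ s2] := h2 k k2.
by split => //; rewrite subsetI s1 s2.
Qed.

End S.

Theorem lemma1 (n p : nat) (hn : n = p.*2.+1) (m : 'I_n -> alt * {set 'I_n}) :
  valid_profile p m ->
  (exists B : {set 'I_n}, bloc p m B) ->
  exists Bstar : {set 'I_n},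
    [/\ bloc p m Bstar, effective m Bstar,
        (forall B : {set 'I_n}, bloc p m B -> effective m B -> B = Bstar) &
        Bstar = \bigcap_(B : {set 'I_n} | bloc p m B) B].
Proof.
move=> hv exB.
pose P k := [exists B, bloc p m B && (#|B| == k)].
have exP : exists k, P k.
  by case: exB => B hB; exists #|B|; apply/existsP; exists B; rewrite hB eqxx.
case: (ex_minnP exP) => k /existsP [B0 /andP [b0 /eqP c0]] kmin.
have sub0 B : bloc p m B -> B0 \subset B.
  move=> hB; have hI := @blocI _ _ _ hn hv _ _ b0 hB.
  have : k <= #|B0 :&: B| by apply: kmin; apply/existsP; exists (B0 :&: B); rewrite hI eqxx.
  rewrite -c0 => hle.
  have e : B0 :&: B = B0.
    by apply/eqP; rewrite eqEcard subsetIl hle.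
  by rewrite -e subsetIr.
have closed0 : forall u v, nom_graph m u v -> u \in B0 -> v \in B0.
  case/blocP: b0 => x /bloc_forP [_ h] u v uv uB; have [_ s] := h u uB.
  exact: (subsetP s).
have eff0 : effective m B0.
  move=> i j iB jB.
  pose R := [set w | connect (induced (nom_graph m) B0) i w].
  have RB : R \subset B0.
    apply/subsetP => w; rewrite inE => /connectP [s ps ->].
    case: s ps => [|z s] //= /andP [/and3P [_ zB _] ps].
    have := (@connect_stay _ (induced (nom_graph m) B0) B0 z (last z s)).
    apply => //; first by move=> u v /and3P [_ -> _].
    by apply/connectP; exists s.
  have bR : bloc p m R.
    case/blocP: b0 => x /bloc_forP [_ h].
    apply/blocP; exists x; apply/bloc_forP; split.
      apply: (@leq_trans #|i |: noms m i|); first by rewrite (@card_noms1 _ _ _ hv).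
      apply: subset_leq_card; apply/subsetP => q; rewrite !inE => /orP [/eqP ->|kn].
        exact: connect0.
      apply: connect1; rewrite /induced iB /nom_graph kn andbT.
      by have [_ s0] := h i iB; apply: (subsetP s0).
    move=> q kR; have kB := subsetP RB q kR; have [-> s1] := h q kB; split => //.
    apply/subsetP => l ln; rewrite inE.
    apply: (connect_trans (x:=i) (y:=q) (z:=l)); first by move: kR; rewrite inE.
    apply: connect1.
    apply/and3P; split => //; exact: (subsetP s1).
  by have := subsetP (sub0 _ bR) j jB; rewrite inE.
exists B0; split => //.
- move=> B hB effB; apply/eqP; rewrite eqEsubset sub0 // andbT.
  have [i iB0] : exists i, i \in B0.
    case/blocP: b0 => x /bloc_forP [c _]; have : 0 < #|B0| by lia.
    by case/card_gt0P => i; exists i.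
  have iB := subsetP (sub0 _ hB) i iB0.
  apply/subsetP => j jB.
  apply: (@connect_stay _ (nom_graph m) B0 i j closed0 _ iB0).
  apply: (connect_sub _ (effB i j iB jB)) => u v /and3P [_ _ uv].
  exact: connect1.
- apply/eqP; rewrite eqEsubset; apply/andP; split.
    by apply/bigcapsP => B hB; apply: sub0.
  exact: bigcap_inf.
Qed.
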